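(* Let $\bar\alpha\in[0,1]$ and $n\ge 1$. Every maximizer $\boldsymbol{\alpha}^*=(\alpha^*_1,\dots,\alpha^*_n)\in[0,1]^n$ of the problem $$\max_{\boldsymbol{\alpha}\in[0,1]^n} C(\boldsymbol{\alpha})\quad\text{subject to}\quad G(\boldsymbol{\alpha})=0$$ has at most one index $i$ with $\alpha^*_i\in(0,1)$.
   Context: Model of a road with $n\ge1$ parallel lanes of common length $d>0$. Vehicles have length $L>0$. A vehicle keeps a headway (space gap) $\bar h$ to the vehicle in front of it if both it and the vehicle in front are autonomous, and headway $h$ otherwise, where $0\le \bar h<h$. Vehicle types within a lane are i.i.d. Bernoulli: each vehicle in lane $i$ is autonomous with probability $\alpha_i\in[0,1]$ (the lane's autonomy level). Set $k_1=(L+h)/d$ and $k_2=(h-\bar h)/d$, so $k_1>k_2>0$ and $k_1-k_2=(L+\bar h)/d>0$. The capacity of a lane with autonomy level $\alpha\in[0,1]$ is $$c(\alpha)=\frac{1}{k_1-k_2\alpha^2}=\frac{d}{L+h-(h-\bar h)\alpha^2}.$$ Let $\bar\alpha\in[0,1]$ be the overall fraction of autonomous vehicles on the road. For $\boldsymbol{\alpha}=(\alpha_1,\dots,\alpha_n)\in[0,1]^n$ define $C(\boldsymbol{\alpha})=\sum_{i=1}^n c(\alpha_i)$ (total capacity) and $G(\boldsymbol{\alpha})=\sum_{i=1}^n(\alpha_i-\bar\alpha)c(\alpha_i)$; the constraint $G(\boldsymbol{\alpha})=0$ expresses that the overall autonomy level equals $\bar\alpha$. *)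

(* Defs.v *)
From HB Require Import structures.
From mathcomp Require Import all_boot all_order all_algebra.
Set Implicit Arguments. Unset Strict Implicit. Unset Printing Implicit Defensive.
Import Order.TTheory GRing.Theory Num.Theory.
Local Open Scope ring_scope.

(* capacity of one lane with autonomy level a :
   c(a) = d / (L + h - (h - hbar) a^2) *)
Definition cap (R : realFieldType) (d L h hbar a : R) : R :=
  d / (L + h - (h - hbar) * a ^+ 2).

Definition Ctot (R : realFieldType) (n : nat) (d L h hbar : R) (al : 'I_n -> R) : R :=
  \sum_(i < n) cap d L h hbar (al i).

Definition Gcon (R : realFieldType) (n : nat) (d L h hbar abar : R) (al : 'I_n -> R) : R :=
  \sum_(i < n) (al i - abar) * cap d L h hbar (al i).

Definition feasible (R : realFieldType) (n : nat) (d L h hbar abar : R) (al : 'I_n -> R) : Prop :=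
  (forall i, 0 <= al i <= 1) /\ Gcon d L h hbar abar al = 0.

Definition is_maximizer (R : realFieldType) (n : nat) (d L h hbar abar : R) (al : 'I_n -> R) : Prop :=
  feasible d L h hbar abar al /\
  (forall be : 'I_n -> R, feasible d L h hbar abar be ->
     Ctot d L h hbar be <= Ctot d L h hbar al).

(* Main.v *)
Require Import Defs.
From HB Require Import structures.
From mathcomp Require Import all_boot all_order all_algebra.
From mathcomp Require Import ring lra.
Import Order.TTheory GRing.Theory Num.Theory.
Set Implicit Arguments. Unset Strict Implicit.
Local Open Scope ring_scope.

Section Conv.
Variable R : rcfType.
Variables al be ga : R.
Hypothesis hal : 0 < al.
Hypothesis hdet : 0 < 4 * al * ga - be ^+ 2.
Definition Qf (w : R) := al * w ^+ 2 + be * w + ga.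

Lemma Qf_gt0 w : 0 < Qf w.
Proof.
have h4 : 0 < 4 * al * Qf w.
  have -> : 4 * al * Qf w = (2 * al * w + be) ^+ 2 + (4 * al * ga - be ^+ 2) by rewrite /Qf; ring.
  by apply: ltr_wpDl; [exact: sqr_ge0|].
by rewrite pmulr_rgt0 // in h4; apply: mulr_gt0 => //; lra.
Qed.

Lemma conv_strict (x y z lam : R) : x != y -> 0 < lam < 1 -> z = lam * x + (1 - lam) * y ->
  Num.sqrt (Qf z) < lam * Num.sqrt (Qf x) + (1 - lam) * Num.sqrt (Qf y).
Proof.
move=> nxy /andP[l0 l1] ->.
set Bxy := al * x * y + be * (x + y) / 2 + ga.
have hB : Bxy < Num.sqrt (Qf x) * Num.sqrt (Qf y).
  rewrite -sqrtrM; last exact: ltW (Qf_gt0 x).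
  have hQ : 0 < Qf x * Qf y by apply: mulr_gt0; apply: Qf_gt0.
  case: (leP Bxy 0) => hb.
    by apply: (le_lt_trans hb); rewrite sqrtr_gt0.
  rewrite -(ger0_norm (ltW hb)) -sqrtr_sqr ltr_sqrt //.
  have -> : Qf x * Qf y = Bxy ^+ 2 + (4 * al * ga - be ^+ 2) / 4 * (x - y) ^+ 2
    by rewrite /Qf /Bxy; field.
  rewrite ltrDl; apply: mulr_gt0; first by apply: divr_gt0 => //; lra.
  by rewrite lt_neqAle eq_sym sqrf_eq0 subr_eq0 nxy sqr_ge0.
set M := lam * Num.sqrt (Qf x) + (1 - lam) * Num.sqrt (Qf y).
have hM : 0 < M.
  rewrite /M; apply: ltr_pwDl; first by apply: mulr_gt0 => //; rewrite sqrtr_gt0 Qf_gt0.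
  by apply: mulr_ge0; [lra| exact: sqrtr_ge0].
rewrite -(ger0_norm (ltW hM)) -sqrtr_sqr ltr_sqrt; last by rewrite exprn_gt0.
have -> : Qf (lam * x + (1 - lam) * y) = lam ^+ 2 * Qf x + (1 - lam) ^+ 2 * Qf y + 2 * lam * (1 - lam) * Bxy
  by rewrite /Qf /Bxy; field.
have -> : M ^+ 2 = lam ^+ 2 * Qf x + (1 - lam) ^+ 2 * Qf y + 2 * lam * (1 - lam) * (Num.sqrt (Qf x) * Num.sqrt (Qf y)).
  have e1 := sqr_sqrtr (ltW (Qf_gt0 x)); have e2 := sqr_sqrtr (ltW (Qf_gt0 y)).
  rewrite /M; move: e1 e2; set s1 := Num.sqrt _; set s2 := Num.sqrt _.
  move=> <- <-; ring.
rewrite ltrD2l ltr_pM2l //; apply: mulr_gt0; [apply: mulr_gt0 => //|lra].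
Qed.

Lemma conv_pair (u v x y : R) : u < v -> u < x -> x <= y -> u + v = x + y ->
  Num.sqrt (Qf x) + Num.sqrt (Qf y) < Num.sqrt (Qf u) + Num.sqrt (Qf v).
Proof.
move=> uv ux xy e.
set lam := (v - x) / (v - u).
have hvu : 0 < v - u by lra.
have l0 : 0 < lam < 1.
  apply/andP; split; first by apply: divr_gt0; lra.
  by rewrite ltr_pdivrMr //; lra.
have nuv : u != v by rewrite lt_eqF.
have h2 : Num.sqrt (Qf y) < lam * Num.sqrt (Qf v) + (1 - lam) * Num.sqrt (Qf u).
  apply: conv_strict; first by rewrite eq_sym.
    by [].
  have -> : y = u + v - x by lra.
  rewrite /lam; field; lra.
have h1' : Num.sqrt (Qf x) < lam * Num.sqrt (Qf u) + (1 - lam) * Num.sqrt (Qf v).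
  apply: conv_strict => //; rewrite /lam; field; lra.
lra.
Qed.
End Conv.

Section Core.
Variable R : rcfType.
Variables a A B d : R.
Hypotheses (ha0 : 0 <= a) (ha1 : a <= 1) (hB : 0 < B) (hBA : B < A) (hd : 0 < d).

Ltac hy := have ha0' : 0 <= a := ha0; have ha1' : a <= 1 := ha1;
  have hB' : 0 < B := hB; have hBA' : B < A := hBA; have hd' : 0 < d := hd.

Definition cc (b : R) := d / (A - B * b ^+ 2).
Definition wf (b : R) := (b - a) * cc b.
Definition EE := A - B * a ^+ 2.
Definition pp (w : R) := d + 2 * B * a * w.
Definition QQ (w : R) := Qf (4 * B * A) (4 * B * a * d) (d ^+ 2) w.
Definition psi (w : R) := (pp w + Num.sqrt (QQ w)) / (2 * EE).

Lemma EE_gt0 : 0 < EE.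
Proof.
hy.
rewrite /EE. have : a ^+ 2 <= 1 by rewrite expr_le1 //.
move=> h; have : B * a ^+ 2 <= B by apply: ler_piMr; lra.
lra.
Qed.

Lemma QQE w : QQ w = pp w ^+ 2 + 4 * EE * B * w ^+ 2.
Proof. hy. rewrite /QQ /Qf /pp /EE; ring. Qed.

Lemma QQ_al : 0 < 4 * B * A.
Proof. hy. by apply: mulr_gt0; [apply: mulr_gt0|]; lra. Qed.

Lemma QQ_det : 0 < 4 * (4 * B * A) * d ^+ 2 - (4 * B * a * d) ^+ 2.
Proof.
hy.
have -> : 4 * (4 * B * A) * d ^+ 2 - (4 * B * a * d) ^+ 2 = 16 * B * d ^+ 2 * EE by rewrite /EE; ring.
apply: mulr_gt0; last exact: EE_gt0.
apply: mulr_gt0; [apply: mulr_gt0; lra | by rewrite exprn_gt0].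
Qed.

Lemma QQ_gt0 w : 0 < QQ w.
Proof. exact: (Qf_gt0 QQ_al QQ_det). Qed.

Lemma psi_root b : 0 < A - B * b ^+ 2 -> cc b = psi (wf b).
Proof.
hy.
move=> hD.
have hD0 : A - B * b ^+ 2 != 0 by rewrite gt_eqF.
have hE := EE_gt0.
have hc : 0 < cc b by apply: divr_gt0.
have e1 : 2 * EE * cc b - pp (wf b) = cc b * (EE + B * (b - a) ^+ 2).
  by rewrite /pp /wf /cc /EE; field.
have e2 : (2 * EE * cc b - pp (wf b)) ^+ 2 = QQ (wf b).
  by rewrite QQE /pp /wf /cc /EE; field.
have hpos : 0 <= 2 * EE * cc b - pp (wf b).
  rewrite e1; apply: mulr_ge0; first exact: ltW.
  apply: addr_ge0; first exact: ltW.
  by apply: mulr_ge0; [exact: ltW | exact: sqr_ge0].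
rewrite /psi -e2 sqrtr_sqr ger0_norm //; field; lra.
Qed.

Lemma psi_gt0 w : 0 < psi w.
Proof.
hy.
have hE := EE_gt0.
apply: divr_gt0; last lra.
case: (ltP 0 (pp w)) => hp.
  by have := sqrtr_ge0 (QQ w); lra.
have hw : w != 0.
  apply/eqP => w0; move: hp; rewrite /pp w0; lra.
have : `|pp w| < Num.sqrt (QQ w).
  rewrite -sqrtr_sqr ltr_sqrt; last exact: QQ_gt0.
  rewrite QQE ltrDl; apply: mulr_gt0; first by apply: mulr_gt0 => //; lra.
  by rewrite lt_neqAle eq_sym sqrf_eq0 hw sqr_ge0.
rewrite ler0_norm //; lra.
Qed.

Lemma psi_inv w (b := a + w / psi w) :
  [/\ 0 < A - B * b ^+ 2, cc b = psi w & wf b = w].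
Proof.
hy.
have hE := EE_gt0.
have hc := psi_gt0 w.
set c := psi w in b hc *.
have hc0 : c != 0 by rewrite gt_eqF.
have e1 : 2 * EE * c - pp w = Num.sqrt (QQ w) by rewrite /c /psi; field; lra.
have e2 : (2 * EE * c - pp w) ^+ 2 = QQ w by rewrite e1 sqr_sqrtr // ltW // QQ_gt0.
have e3 : EE * c ^+ 2 - pp w * c - B * w ^+ 2 = 0.
  have : 4 * EE * (EE * c ^+ 2 - pp w * c - B * w ^+ 2) = 0.
    by rewrite -[0](subrr (QQ w)) -{1}e2 QQE; ring.
  by move/eqP; rewrite mulf_eq0 => /orP[|/eqP //]; rewrite mulf_eq0 gt_eqF //; lra.
have eD : A - B * b ^+ 2 = d / c.
  have : A - B * b ^+ 2 - d / c = (EE * c ^+ 2 - pp w * c - B * w ^+ 2) / c ^+ 2.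
    by rewrite /b /EE /pp; field.
  rewrite e3 mul0r => /eqP; rewrite subr_eq0 => /eqP //.
split.
- by rewrite eD; apply: divr_gt0.
- by rewrite /cc eD; field; rewrite hc0 gt_eqF.
- rewrite /wf /cc eD /b; field; try rewrite hc0 gt_eqF //.
Qed.

Lemma hh_mono b1 b2 : b1 < b2 -> 0 < A - B * b1 ^+ 2 -> 0 < A - B * b2 ^+ 2 ->
  0 < A + B * b1 * b2 - a * B * (b1 + b2) -> wf b1 < wf b2.
Proof.
hy.
move=> lt12 h1 h2 hK.
rewrite -subr_gt0.
have -> : wf b2 - wf b1 = d * (b2 - b1) * (A + B * b1 * b2 - a * B * (b1 + b2)) /
   ((A - B * b1 ^+ 2) * (A - B * b2 ^+ 2)).
  by rewrite /wf /cc; field; apply/andP; split; rewrite gt_eqF.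
apply: divr_gt0; last exact: mulr_gt0.
apply: mulr_gt0 => //; apply: mulr_gt0 => //; lra.
Qed.

Lemma inv_range w : wf 0 <= w <= wf 1 -> 0 <= a + w / psi w <= 1.
Proof.
hy.
move=> /andP[w0 w1].
have [hD hc hw] := psi_inv w.
move: hD hw; set b := a + w / psi w => hD hw.
apply/andP; split.
  rewrite leNgt; apply/negP => bneg.
  have hab : 0 <= a * B * (- b) by apply: mulr_ge0; [apply: mulr_ge0 => //; lra| lra].
  have : wf b < wf 0.
    apply: hh_mono => //; rewrite ?expr0n /= ?mulr0 ?subr0 ?addr0; nra.
  lra.
rewrite leNgt; apply/negP => bg1.
have : wf 1 < wf b.
  apply: hh_mono => //; first by rewrite expr1n mulr1; lra.
  have : 0 <= B * b * (1 - a) by apply: mulr_ge0; [apply: mulr_ge0; lra| lra].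
  have : a * B <= B by apply: ler_piMl; lra.
  lra.
lra.
Qed.

Lemma core x y : 0 < x < 1 -> 0 < y < 1 -> wf x <= wf y ->
  exists x' y', [/\ 0 <= x' <= 1, 0 <= y' <= 1, wf x' + wf y' = wf x + wf y &
     cc x + cc y < cc x' + cc y'].
Proof.
hy.
move=> /andP[x0 x1] /andP[y0 y1] hxy.
have Dpos z : 0 <= z <= 1 -> 0 < A - B * z ^+ 2.
  move=> /andP[z0 z1]; have : z ^+ 2 <= 1 by rewrite expr_le1.
  move=> hz; have : B * z ^+ 2 <= B by apply: ler_piMr; lra.
  lra.
have aB1 : a * B <= B by apply: ler_piMl; lra.
have hx0 : wf 0 < wf x.
  apply: hh_mono => //; [by apply: Dpos; rewrite lexx ler01 | by apply: Dpos; apply/andP; split; lra|].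
  have : a * B * x <= B by apply: le_trans aB1; rewrite ler_piMr //; [apply: mulr_ge0; lra|lra].
  rewrite mulr0 mul0r addr0 add0r; lra.
have hy1 : wf y < wf 1.
  apply: hh_mono => //; [by apply: Dpos; apply/andP; split; lra | by apply: Dpos; rewrite ler01 lexx|].
  have : 0 <= B * y * (1 - a) by apply: mulr_ge0; [apply: mulr_ge0; lra| lra].
  rewrite mulr1; lra.
set s := Num.min (wf x - wf 0) (wf 1 - wf y).
have s0 : 0 < s by rewrite lt_min; apply/andP; split; lra.
have s1 : s <= wf x - wf 0 by rewrite ge_min lexx.
have s2 : s <= wf 1 - wf y by rewrite ge_min lexx orbT.
set u := wf x - s; set v := wf y + s.
have [Du cu hu] := psi_inv u.
have [Dv cv hv] := psi_inv v.
exists (a + u / psi u), (a + v / psi v); split.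
- by apply: inv_range; apply/andP; split; rewrite /u; lra.
- by apply: inv_range; apply/andP; split; rewrite /v; lra.
- by rewrite hu hv /u /v; ring.
rewrite cu cv (psi_root (Dpos x _)); last by apply/andP; split; lra.
rewrite (psi_root (Dpos y _)); last by apply/andP; split; lra.
have hE := EE_gt0.
have key : Num.sqrt (QQ (wf x)) + Num.sqrt (QQ (wf y)) < Num.sqrt (QQ u) + Num.sqrt (QQ v).
  apply: (conv_pair QQ_al QQ_det); rewrite /u /v; lra.
rewrite -subr_gt0.
have -> : psi u + psi v - (psi (wf x) + psi (wf y)) =
   ((Num.sqrt (QQ u) + Num.sqrt (QQ v)) - (Num.sqrt (QQ (wf x)) + Num.sqrt (QQ (wf y)))) / (2 * EE).
  rewrite /psi /pp /u /v; field; lra.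
apply: divr_gt0; lra.
Qed.
End Core.

Lemma sum_upd (R : rcfType) (n : nat) (F : R -> R) (al : 'I_n -> R) (i j : 'I_n) (x y : R) :
  i != j ->
  \sum_(k < n) F (if k == i then x else if k == j then y else al k) =
  \sum_(k < n) F (al k) + (F x + F y - F (al i) - F (al j)).
Proof.
move=> nij.
have nji : j != i by rewrite eq_sym.
rewrite (bigD1 i) // (bigD1 j) /=; last by [].
rewrite [X in _ = X + _](bigD1 i) // [X in _ = _ + X + _](bigD1 j) /=; last by [].
rewrite eqxx eq_sym (negbTE nij) eqxx.
rewrite (eq_bigr (fun k => F (al k))); last first.
  by move=> k /andP[ki kj]; rewrite (negbTE ki) (negbTE kj).
ring.
Qed.

Lemma aux (R : rcfType) (n : nat) (d L h hbar abar : R)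
  (hd : 0 < d) (hL : 0 < L) (hhbar : 0 <= hbar) (hh0 : hbar < h)
  (habar : 0 <= abar <= 1) (al : 'I_n -> R) (i j : 'I_n) :
  is_maximizer d L h hbar abar al -> i != j -> 0 < al i < 1 -> 0 < al j < 1 ->
  wf abar (L + h) (h - hbar) d (al i) <= wf abar (L + h) (h - hbar) d (al j) -> False.
Proof.
move=> [[hb hG] hmax] nij hi hj hle.
have hB : 0 < h - hbar by rewrite subr_gt0.
have hBA : h - hbar < L + h.
  have hL' : 0 < L := hL. have hhb : 0 <= hbar := hhbar. lra.
case/andP: habar => ha0 ha1.
have [x' [y' [hx' hy' hsum hc]]] := core ha0 ha1 hB hBA hd hi hj hle.
set be := fun k => if k == i then x' else if k == j then y' else al k.
have hfe : feasible d L h hbar abar be.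
  split.
    move=> k; rewrite /be; case: (k == i) => //; case: (k == j) => //.
  rewrite /Gcon (@sum_upd R n (fun b => (b - abar) * cap d L h hbar b) al i j x' y' nij).
  rewrite /=; move: hG; rewrite /Gcon => ->.
  move: hsum; rewrite /wf /cc /cap => ->; ring.
have := hmax be hfe.
rewrite /Ctot (@sum_upd R n (fun b => cap d L h hbar b) al i j x' y' nij).
rewrite /=; move: hc; rewrite /cc /cap; lra.
Qed.

Theorem theorem1 (R : rcfType) (n : nat) (d L h hbar abar : R)
  (hn : (1 <= n)%N) (hd : 0 < d) (hL : 0 < L) (hhbar : 0 <= hbar) (hh : hbar < h)
  (habar : 0 <= abar <= 1) (al : 'I_n -> R) :
  is_maximizer d L h hbar abar al ->
  forall i j : 'I_n, 0 < al i < 1 -> 0 < al j < 1 -> i = j.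
Proof.
move=> hm i j hi hj.
case: (eqVneq i j) => // nij; exfalso.
case: (lerP (wf abar (L + h) (h - hbar) d (al i)) (wf abar (L + h) (h - hbar) d (al j))) => hle.
  exact: (aux hd hL hhbar hh habar hm nij hi hj hle).
apply: (aux hd hL hhbar hh habar hm _ hj hi (ltW hle)); by rewrite eq_sym.
Qed.
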